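(* Let $q$ be a prime power and $n\ge 3$ an integer. Then $$B_q(n,3,3;3)\le\left(1+\frac{1}{2\left[{3\atop 2}\right]_q-1}\right)\frac{\left[{n\atop 2}\right]_q}{\left[{3\atop 2}\right]_q}.$$
   Context: For a prime power $q$, $\mathcal{G}_q(n,k)$ denotes the set of all $k$-dimensional subspaces of $\mathbb{F}_q^n$, and the Gaussian binomial coefficient is $\left[{n\atop k}\right]_q=\prod_{i=0}^{k-1}\frac{q^n-q^i}{q^k-q^i}=|\mathcal{G}_q(n,k)|$. An $\alpha$-$(n,k,\delta)_q^c$ covering Grassmannian code is a subset $\mathcal{C}\subseteq\mathcal{G}_q(n,k)$ (no repeated codewords) such that every set of $\alpha$ distinct codewords of $\mathcal{C}$ spans a subspace of $\mathbb{F}_q^n$ of dimension at least $k+\delta$. $B_q(n,k,\delta;\alpha)$ denotes the maximum size of an $\alpha$-$(n,k,\delta)_q^c$ code. *)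

(* Defs.v *)
From HB Require Import structures.
From mathcomp Require Import all_boot all_order all_algebra all_field.
Set Implicit Arguments. Unset Strict Implicit. Unset Printing Implicit Defensive.
Import Order.TTheory GRing.Theory Num.Theory.
Local Open Scope ring_scope.

Definition gauss_binom (q n k : nat) : rat :=
  \prod_(i < k) ((q%:Q ^+ n - q%:Q ^+ i) / (q%:Q ^+ k - q%:Q ^+ i)).

(* An alpha-(n,k,delta)_q^c covering Grassmannian code over F, given as a
   duplicate-free list of subspaces of F^n (= row vectors 'rV[F]_n), each of
   dimension k, such that any alpha distinct codewords span a subspace of
   dimension at least k + delta. *)
Definition covering_code (F : fieldType) (n k delta alpha : nat)
    (C : seq {vspace 'rV[F]_n}) : Prop :=
  [/\ uniq C,
      (forall U, U \in C -> \dim U = k) &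
      (forall S : seq {vspace 'rV[F]_n},
          uniq S -> size S = alpha -> {subset S <= C} ->
          (k + delta <= \dim (\sum_(U <- S) U)%VS)%N)].

(* Main.v *)
Require Import Defs.
From HB Require Import structures.
From mathcomp Require Import all_boot all_order all_algebra all_field zify ring lra.
Import Order.TTheory GRing.Theory Num.Theory.
Set Implicit Arguments. Unset Strict Implicit. Unset Printing Implicit Defensive.

Section S.
Variables (F : finFieldType) (n : nat).
Local Notation V := {vspace 'rV[F]_n}.

Lemma dim_lt (W U : V) w : (W <= U)%VS -> w \in U -> w \notin W -> (\dim W < \dim U)%N.
Proof.
move=> sWU wU wW; have [le E] := dimv_leqif_sup sWU.
rewrite ltn_neqAle le andbT E; apply/negP => /subvP/(_ w wU); exact/negP.
Qed.

Lemma dim_cap3 (A B : V) : A != B -> \dim A = 3%N -> \dim B = 3%N -> (\dim (A :&: B) <= 2)%N.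
Proof.
move=> AB dA dB; rewrite leqNgt; apply/negP => H.
have e1 : (A :&: B)%VS = A by apply/eqP; rewrite eqEdim capvSl dA.
have e2 : (A :&: B)%VS = B by apply/eqP; rewrite eqEdim capvSr dB.
by move: AB; rewrite -e1 e2 eqxx.
Qed.

Lemma dim_triple (A B C W W' : V) : A != B -> \dim A = 3%N -> \dim B = 3%N -> \dim C = 3%N ->
  (W <= A :&: B)%VS -> (2 <= \dim W)%N -> (W' <= A :&: C)%VS -> (2 <= \dim W')%N ->
  (\dim (A + B + C) <= 5)%N.
Proof.
move=> AB dA dB dC sW dW sW' dW'.
have c1 := dim_cap3 AB dA dB.
have h1 := dimv_sum_cap A B.
have h2 := dimv_sum_cap (A + B) C.
have : (W' <= (A + B) :&: C)%VS.
  rewrite subv_cap; move: sW'; rewrite subv_cap => /andP[s1 ->]; rewrite andbT.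
  exact: subv_trans s1 (addvSl _ _).
move/dimvS => h3.
have h4 := dimvS sW. lia.
Qed.

Local Open Scope ring_scope.
Definition indep (p : 'rV[F]_n * 'rV[F]_n) := (p.1 != 0) && (p.2 \notin <[p.1]>%VS).
Definition PS (U : V) := [set p | [&& indep p, p.1 \in U & p.2 \in U]].
Local Notation q := #|F|.

Lemma card_PS (U : V) : #|PS U| = ((q ^ \dim U - 1) * (q ^ \dim U - q))%N.
Proof.
have -> : #|PS U| = (\sum_u \sum_v (if (u, v) \in PS U then 1 else 0))%N.
  by rewrite pair_bigA /= -sum1_card big_mkcond; apply: eq_bigr => -[u v] _.
rewrite (eq_bigr (fun u => if (u \in U) && (u != 0) then (q ^ \dim U - q)%N else 0%N)).
  rewrite -big_mkcond sum_nat_const; congr (_ * _)%N.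
  have -> : #|[pred u | (u \in U) && (u != 0)]| = #|[set u | u \in U] :\ 0|.
    by apply: eq_card => u; rewrite !inE andbC.
  move: (cardsD1 (0:'rV[F]_n) [set u | u \in U]); rewrite inE mem0v cardsE card_vspace.
  by move=> -> /=; rewrite add1n subn1.
move=> u _; case: ifP => [/andP[uU u0]|H].
  have -> : (\sum_v (if (u,v) \in PS U then 1 else 0))%N =
      #|[set v | v \in U] :\: [set v | v \in <[u]>%VS]|.
    rewrite -sum1_card [in RHS]big_mkcond; apply: eq_bigr => v _.
    by rewrite !inE /indep /= uU u0 andbC.
  rewrite cardsD (setIidPr _); last first.
    by apply/subsetP => v; rewrite !inE => /vlineP[k ->]; rewrite memvZ.
  by rewrite !cardsE !card_vspace dim_vline u0 expn1.
apply: big1 => v _; rewrite inE /indep /=.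
by case: (u \in U) (u != 0) H => [] [] //=; rewrite ?andbF.
Qed.

Definition L (p : 'rV[F]_n * 'rV[F]_n) : V := (<[p.1]> + <[p.2]>)%VS.

Lemma dimL p : indep p -> (2 <= \dim (L p))%N.
Proof.
case/andP=> p10 p2; have := dim_lt (addvSl <[p.1]> <[p.2]>) (memv_add (mem0v _) (memv_line p.2)) .
rewrite add0r dim_vline p10 => H; exact: H p2.
Qed.

Lemma PS_L p A : p \in PS A -> indep p /\ (L p <= A)%VS.
Proof. by rewrite inE => /and3P[-> h1 h2]; rewrite /L subv_add -!memvE h1 h2. Qed.

Variable C : seq V.
Hypothesis hC : covering_code 3 3 3 C.

Lemma no_triple A B D W W' : A \in C -> B \in C -> D \in C -> A != B -> A != D -> B != D ->
  (W <= A :&: B)%VS -> (2 <= \dim W)%N -> (W' <= A :&: D)%VS -> (2 <= \dim W')%N -> False.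
Proof.
case: hC => uC dC cov AC BC DC AB AD BD sW dW sW' dW'.
have := dim_triple AB (dC _ AC) (dC _ BC) (dC _ DC) sW dW sW' dW'.
have := cov [:: A; B; D]; rewrite /= !inE negb_or AB AD BD /= => /(_ isT erefl).
rewrite !big_cons big_nil addv0 addvA => H; have := H _; move=> {}H.
have: (6 <= \dim (A + B + D))%N by apply: H => x; rewrite !inE => /or3P[] /eqP ->.
lia.
Qed.

Definition m p := count (fun A => p \in PS A) C.

Lemma m_le2 p : (m p <= 2)%N.
Proof.
case: hC => uC _ _.
rewrite leqNgt; apply/negP => H.
set s := filter (fun A => p \in PS A) C.
have us : uniq (take 3 s) by apply/take_uniq/filter_uniq.
have sz : size (take 3 s) = 3%N by rewrite size_takel // size_filter.
have sub : forall A, A \in take 3 s -> (A \in C) && (p \in PS A).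
  by move=> A /mem_take; rewrite mem_filter andbC.
move: us sz sub; case: (take 3 s) => [|A [|B [|D [|]]]] //= us _ sub.
move: us; rewrite !inE negb_or => /andP[/andP[AB AD] /andP[BD _]].
have /andP[AC pA] := sub A (mem_head _ _).
have /andP[BC pB] : (B \in C) && (p \in PS B) by apply: sub; rewrite !inE eqxx orbT.
have /andP[DC pD] : (D \in C) && (p \in PS D) by apply: sub; rewrite !inE eqxx !orbT.
have [ip sA] := PS_L pA; have [_ sB] := PS_L pB; have [_ sD] := PS_L pD.
apply: (no_triple AC BC DC AB AD BD (W := L p) (W' := L p)); rewrite ?dimL ?subv_cap ?sA ?sB ?sD //.
Qed.

Lemma exists_other p A : (2 <= m p)%N -> exists2 B, B \in C & (B != A) && (p \in PS B).
Proof.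
case: hC => uC _ _ H.
set s := filter (fun A => p \in PS A) C.
have : has (fun B => B != A) s.
  apply/negPn/negP => /hasPn H'.
  have sub : {subset s <= [:: A]} by move=> B hB; rewrite inE; have := H' B hB; rewrite negbK.
  have us : uniq s by apply: filter_uniq.
  have := uniq_leq_size us sub.
  by move: H; rewrite /m -size_filter -/s /=; lia.
case/hasP => B; rewrite mem_filter => /andP[pB BC] BA.
by exists B => //; rewrite BA pB.
Qed.

Definition Dset := [set p | (2 <= m p)%N].

Lemma D_bound A : A \in C -> (#|PS A :&: Dset| <= (q ^ 2 - 1) * (q ^ 2 - q))%N.
Proof.
move=> AC; have [uC dC _] := hC.
case: (set_0Vmem (PS A :&: Dset)) => [->|[p0]]; first by rewrite cards0.
rewrite in_setI => /andP[p0A]; rewrite inE => p0D.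
have [B0 B0C /andP[B0A p0B0]] := exists_other A p0D.
have AB0 : A != B0 by rewrite eq_sym.
have [ip0 sA0] := PS_L p0A; have [_ sB0] := PS_L p0B0.
have sW : (L p0 <= A :&: B0)%VS by rewrite subv_cap sA0 sB0.
have dW : \dim (A :&: B0) = 2%N.
  have := dim_cap3 AB0 (dC _ AC) (dC _ B0C); have := dimvS sW; have := dimL ip0; lia.
rewrite -dW -card_PS; apply: subset_leq_card; apply/subsetP => p.
rewrite in_setI => /andP[pA]; rewrite inE => pD.
have [B BC /andP[BA pB]] := exists_other A pD.
have [ip sA] := PS_L pA; have [_ sB] := PS_L pB.
case: (eqVneq B B0) => [EB|BB0].
  move: pA pB; rewrite EB !inE ip !memv_cap /=.
  by move=> /andP[-> ->] /andP[-> ->].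
exfalso; apply: (no_triple AC B0C BC AB0 (negbT _) (negbT _) sW (W' := L p)).
- by apply/negbTE; rewrite eq_sym.
- by apply/negbTE; rewrite eq_sym.
- exact: dimL.
- by rewrite subv_cap sA sB.
- exact: dimL.
Qed.

Lemma sum_card (X : V -> {set 'rV[F]_n * 'rV[F]_n}) :
  (\sum_(A <- C) #|X A| = \sum_p count (fun A => p \in X A) C)%N.
Proof.
under eq_bigr do rewrite -sum1_card big_mkcond.
rewrite exchange_big; apply: eq_bigr => p _.
by rewrite -sum1_count [RHS]big_mkcond.
Qed.

Lemma sum_const_seq (c : nat) : (\sum_(A <- C) c = size C * c)%N.
Proof. by rewrite big_const_seq count_predT iter_addn_0 mulnC. Qed.

Lemma main_nat : (2 * (size C * ((q^3-1)*(q^3-q))) <= 2 * ((q^n-1)*(q^n-q)) + size C * ((q^2-1)*(q^2-q)))%N.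
Proof.
have [uC dC _] := hC.
have E1 : (\sum_(A <- C) #|PS A| = size C * ((q^3-1)*(q^3-q)))%N.
  rewrite -sum_const_seq big_seq [RHS]big_seq; apply: eq_bigr => A AC.
  by rewrite card_PS dC.
have E2 : (\sum_(A <- C) #|PS A :&: Dset| <= size C * ((q^2-1)*(q^2-q)))%N.
  rewrite -sum_const_seq big_seq [X in (_ <= X)%N]big_seq; apply: leq_sum => A AC.
  exact: D_bound.
have E3 : #|PS fullv| = ((q^n-1)*(q^n-q))%N.
  by rewrite card_PS dimvf dim_matrix mul1r.
rewrite -E1 -E3; apply: leq_trans (leq_add (leqnn _) E2).
have -> : (2 * #|PS fullv| = \sum_p 2 * (p \in PS fullv))%N.
  by rewrite -sum1_card big_mkcond big_distrr /=; apply: eq_bigr => p _; case: ifP.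
rewrite !sum_card big_distrr -big_split /=.
apply: leq_sum => p _.
have h2 := m_le2 p; rewrite -/(m p).
have -> : count (fun A => p \in PS A :&: Dset) C = (m p * (p \in Dset))%N.
  rewrite /m; case: (boolP (p \in Dset)) => pD.
    by rewrite muln1; apply: eq_count => A; rewrite in_setI pD andbT.
  by rewrite muln0; rewrite (eq_count (a2 := pred0)) ?count_pred0 // => A; rewrite in_setI (negbTE pD) andbF.
case: (posnP (m p)) => [->|mp]; first by rewrite muln0.
have -> : p \in PS fullv.
  move: mp; rewrite /m -has_count => /hasP[A _]; rewrite !inE memvf => /and3P[-> _ _].
  by rewrite memvf.
rewrite inE /=; case: (m p) mp h2 => [|[|[|k]]] //=.
Qed.
End S.
Local Open Scope ring_scope.
Lemma gb2 (q k : nat) : gauss_binom q k 2 =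
  ((q%:Q ^+ k - 1) / (q%:Q ^+ 2 - 1)) * ((q%:Q ^+ k - q%:Q) / (q%:Q ^+ 2 - q%:Q)).
Proof. by rewrite /gauss_binom !big_ord_recr big_ord0 /= mul1r expr0 expr1. Qed.

Lemma final (q n c : nat) (hq : (1 < q)%N) (hn : (3 <= n)%N)
  (H : (2 * (c * ((q^3-1)*(q^3-q))) <= 2 * ((q^n-1)*(q^n-q)) + c * ((q^2-1)*(q^2-q)))%N) :
  c%:R <= (1 + 1 / (2 * gauss_binom q 3 2 - 1)) * gauss_binom q n 2 / gauss_binom q 3 2 :> rat.
Proof.
have q1 k : (1 <= q ^ k)%N by rewrite expn_gt0; lia.
have qk k : (0 < k)%N -> (q <= q ^ k)%N.
  by move=> k0; rewrite -{1}(expn1 q) leq_exp2l //; lia.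
move: H; rewrite -(ler_nat rat) !(natrD, natrM, natrB, natrX) ?qk ?q1 //.
rewrite !gb2.
have Q2 : 2 <= q%:R :> rat by rewrite (ler_nat rat 2 q).
set Q := q%:R : rat; set x := Q ^+ n; set C := c%:R : rat => H.
have d1 : Q ^+ 2 - 1 != 0 by apply/eqP; nra.
have d2 : Q ^+ 2 - Q != 0 by apply/eqP; nra.
have -> : (Q ^+ 3 - 1) / (Q ^+ 2 - 1) * ((Q ^+ 3 - Q) / (Q ^+ 2 - Q)) = Q^+2 + Q + 1.
  by field; rewrite d1 d2.
have b0 : 0 < (Q ^+ 2 - 1) * (Q ^+ 2 - Q) by nra.
have e0 : 0 < 2 * (Q ^+ 2 + Q + 1) - 1 by nra.
have -> : (1 + 1 / (2 * (Q ^+ 2 + Q + 1) - 1)) * ((x - 1) / (Q ^+ 2 - 1) * ((x - Q) / (Q ^+ 2 - Q))) /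
   (Q ^+ 2 + Q + 1) = 2 * (x - 1) * (x - Q) / ((Q ^+ 2 - 1) * (Q ^+ 2 - Q) * (2 * (Q ^+ 2 + Q + 1) - 1)).
  field; rewrite -/Q d1 d2 /=; apply/andP; split; apply/eqP; nra.
rewrite ler_pdivlMr; last by apply: mulr_gt0.
have ha : (Q ^+ 3 - 1) * (Q ^+ 3 - Q) = (Q ^+ 2 - 1) * (Q ^+ 2 - Q) * (Q^+2 + Q + 1) by ring.
rewrite ha in H. set b := (Q ^+ 2 - 1) * (Q ^+ 2 - Q) in H *. set s := Q ^+ 2 + Q + 1 in H *. set N := (x - 1) * (x - Q) in H. have -> : 2 * (x - 1) * (x - Q) = 2 * N by rewrite /N; ring. have -> : C * (b * (2 * s - 1)) = 2 * (C * (b * s)) - C * b by ring. by rewrite lerBlDr.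
lia.

Qed.

Unset Implicit Arguments.
Theorem mainTheorem2 (F : finFieldType) (n : nat) (hn : (3 <= n)%N)
    (C : seq {vspace 'rV[F]_n}) (hC : @covering_code F n 3 3 3 C) :
  (size C)%:R <=
    (1 + 1 / (2 * gauss_binom #|F| 3 2 - 1)) *
    gauss_binom #|F| n 2 / gauss_binom #|F| 3 2 :> rat.
Proof.
exact: (final (finNzRing_gt1 F) hn (main_nat hC)).
Qed.
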